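(* Assume the Nested Logit model without outside option described in the context satisfies Assumptions 1 and 2, and suppose the true choice probabilities $\phi(i,S)$ are known for all $S \in \mathcal{S} \cup \{[n]\}$ and $i \in S$ (so all boost factors are known exactly). Then the matrix $E$ returned by Algorithm 2 (described in the context) satisfies $E[i,j] = \mathbf{1}(N(i) = N(j))$ for all $i \neq j$ in $[n]$, except possibly when $|N(i)| = |N(j)| = 1$, in which case $E[i,j]$ may equal $1$.
   Context: Items: $[n]=\{1,\dots,n\}$ with $n\ge 2$. Experiment design: fix an integer base $b \ge 2$, let $L = \lceil \log_b n \rceil$, fix an injective map $\sigma: [n] \to \{0,\dots,b-1\}^L$ with coordinates $\sigma_\ell(i)$, let $S_{\ell,-d} = \{i \in [n] : \sigma_\ell(i) \neq d\}$ for $\ell \in \{1,\dots,L\}$, $d \in \{0,\dots,b-1\}$, and $\mathcal{S} = \{S_{\ell,-d}\}_{\ell,d}$; the control assortment $[n]$ is also offered. Nested Logit model without outside option: $\mathcal{N}$ is a partition of $[n]$ into nests, $N(i)$ the nest containing $i$; weights $v_i > 0$; parameters $\lambda_N \in [0,1]$, with an extra weight $v_N>0$ when $\lambda_N=0$. $v_N(S) = (\sum_{i \in N \cap S} v_i)^{\lambda_N}$ if $\lambda_N \in (0,1]$, $v_N(S) = v_N \mathbf{1}(N \cap S \neq \emptyset)$ if $\lambda_N = 0$. For $i \in S$, $\phi(i,S) = \frac{v_{N(i)}(S)}{\sum_{N \in \mathcal{N}} v_N(S)} \cdot \frac{v_i}{\sum_{j \in N(i) \cap S} v_j}$. Boost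 factor: $\mathsf{BF}(i,S) = \phi(i,S)/\phi(i,[n])$. Multiplier: $\mathsf{Mult}(N,S) = \left(\frac{\sum_{j \in N} v_j}{\sum_{j \in N \cap S} v_j}\right)^{1-\lambda_N}$. Assumption 1: $\lambda_N = 1$ iff $|N| = 1$. Assumption 2: for every $S \in \mathcal{S}$ and distinct nests $N \neq N'$ with $\emptyset \neq N \cap S \neq N$ and $\emptyset \neq N' \cap S \neq N'$, $\mathsf{Mult}(N,S) \neq \mathsf{Mult}(N',S)$. Algorithm 2 maintains a symmetric matrix $E$ with entries $E[i,j] \in \{0,1,\text{null}\}$ for $i \neq j$ (every assignment to $E[i,j]$ is also made to $E[j,i]$), initially all null. (1) For each $S \in \mathcal{S}$ and each pair of distinct $i,j \in S$: if $\mathsf{BF}(i,S) \neq \mathsf{BF}(j,S)$ set $E[i,j] \gets 0$; else if $\mathsf{BF}(i,S) = \mathsf{BF}(j,S) > \min_{k \in S} \mathsf{BF}(k,S)$ set $E[i,j] \gets 1$. (2) For each $S \in \mathcal{S}$ in turn (any order), let $\mathsf{minBF}(S) = \arg\min_{k \in S}\mathsf{BF}(k,S)$; if $E[i,j] = 0$ for some distinct $i,j \in \mathsf{minBF}(S)$, set $E[i,k] \gets 0$ for all $i \in \mathsf{minBF}(S)$ and all $k \notin S$; otherwise set $E[i,j] \gets 1$ for all distinct $i,j \in \mathsf{minBF}(S)$. (3) One-hop transitivity: compute the set of pairs $(i,j)$ with $E[i,j] = \text{null}$ for which some $k \notin \{i,j\}$ has $E[i,k] = E[j,k] = 1$, and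 set all these entries to $1$. (4) Identify missing pairs: compute the set of pairs $(i,j)$ with $E[i,j] = \text{null}$ such that $E[i,k] \neq 1$ and $E[j,k] \neq 1$ for all $k \notin \{i,j\}$, and set all these entries to $1$. (5) Set every remaining null entry to $0$ and return $E$. *)

(* Defs.v *)
From HB Require Import structures.
From mathcomp Require Import all_boot all_order all_algebra.
From mathcomp Require Import reals exp.
Set Implicit Arguments. Unset Strict Implicit. Unset Printing Implicit Defensive.
Import Order.TTheory GRing.Theory Num.Theory.
Local Open Scope ring_scope.

Definition Lof (n b : nat) : nat := up_log b n.

Definition Sld (n b L : nat) (sigma : 'I_n -> {ffun 'I_L -> 'I_b})
  (l : 'I_L) (d : 'I_b) : {set 'I_n} := [set i | sigma i l != d].

Definition calS (n b L : nat) (sigma : 'I_n -> {ffun 'I_L -> 'I_b}) : seq {set 'I_n} :=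
  undup [seq Sld sigma l d | l <- enum 'I_L, d <- enum 'I_b].

(* The partition into nests is given by a labelling nest : 'I_n -> 'I_n; the nest
   N(i) is the fibre of nest through i.  lam c and vN c are the parameters lambda_N
   and v_N of the nest with label c. *)
Section NL.
Variables (R : realType) (n : nat) (nest : 'I_n -> 'I_n) (v : 'I_n -> R)
  (lam : 'I_n -> R) (vN : 'I_n -> R).

Definition Nset (i : 'I_n) : {set 'I_n} := [set j | nest j == nest i].
Definition NsetL (c : 'I_n) : {set 'I_n} := [set j | nest j == c].
Definition labels : {set 'I_n} := [set nest i | i in [set: 'I_n]].

Definition wsum (A : {set 'I_n}) : R := \sum_(j in A) v j.

Definition vNest (c : 'I_n) (S : {set 'I_n}) : R :=
  if lam c == 0 then vN c * (NsetL c :&: S != set0)%:R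
  else (wsum (NsetL c :&: S)) `^ (lam c).

Definition phi (i : 'I_n) (S : {set 'I_n}) : R :=
  vNest (nest i) S / (\sum_(c in labels) vNest c S) * (v i / wsum (Nset i :&: S)).

Definition BF (i : 'I_n) (S : {set 'I_n}) : R := phi i S / phi i [set: 'I_n].

Definition Mult (c : 'I_n) (S : {set 'I_n}) : R :=
  (wsum (NsetL c) / wsum (NsetL c :&: S)) `^ (1 - lam c).

Definition partial_in (c : 'I_n) (S : {set 'I_n}) : bool :=
  (NsetL c :&: S != set0) && ~~ (NsetL c \subset S).
End NL.

(* E : 'I_n -> 'I_n -> option bool ; None = null, Some false = 0, Some true = 1.
   Entries are always updated symmetrically; only off-diagonal entries matter. *)
Section Alg.
Variables (R : realType) (n : nat) (bf : 'I_n -> {set 'I_n} -> R).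
Definition Emat := 'I_n -> 'I_n -> option bool.

Definition minBF (S : {set 'I_n}) : {set 'I_n} :=
  [set k in S | [forall k' in S, bf k S <= bf k' S]].

(* Step (1), for one set S: all pairs of distinct i,j in S (the written values
   depend only on S, so the order of the pairs is irrelevant). *)
Definition step1S (E : Emat) (S : {set 'I_n}) : Emat := fun a b =>
  if [&& a != b, a \in S & b \in S] then
    if bf a S != bf b S then Some false
    else if [exists k in S, bf k S < bf a S] then Some true
    else E a b
  else E a b.

Definition step2S (E : Emat) (S : {set 'I_n}) : Emat :=
  let M := minBF S in
  if [exists i in M, exists j in M, (i != j) && (E i j == Some false)] then
    (fun a b => if ((a \in M) && (b \notin S)) || ((b \in M) && (a \notin S))
                then Some false else E a b)
  else
    (fun a b => if [&& a != b, a \in M & b \in M] then Some true else E a b).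

(* Step (3): one-hop transitivity (computed simultaneously). *)
Definition step3 (E : Emat) : Emat := fun a b =>
  if (E a b == None) &&
     [exists k, [&& k != a, k != b, E a k == Some true & E b k == Some true]]
  then Some true else E a b.

(* Step (4): missing pairs (computed simultaneously). *)
Definition step4 (E : Emat) : Emat := fun a b =>
  if (E a b == None) &&
     [forall k, ((k != a) && (k != b)) ==>
                  ((E a k != Some true) && (E b k != Some true))]
  then Some true else E a b.

Definition step5 (E : Emat) : Emat := fun a b =>
  if E a b is Some x then Some x else Some false.

(* s1, s2: the orders in which the sets of \mathcal S are processed in steps 1, 2. *)
Definition algorithm2 (s1 s2 : seq {set 'I_n}) : Emat :=
  step5 (step4 (step3 (foldl step2S (foldl step1S (fun _ _ => None) s1) s2))).
End Alg.

(* Main.v *)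
Require Import Defs.
From HB Require Import structures.
From mathcomp Require Import all_boot all_order all_algebra.
From mathcomp Require Import reals exp.
From mathcomp Require Import ring lra.
Set Implicit Arguments. Unset Strict Implicit. Unset Printing Implicit Defensive.
Import Order.TTheory GRing.Theory Num.Theory.
Local Open Scope ring_scope.

Lemma foldl_ind (T : Type) (U : eqType) (f : T -> U -> T) (P : T -> Prop) s x :
  P x -> (forall y u, u \in s -> P y -> P (f y u)) -> P (foldl f x s).
Proof.
elim: s x => //= u s IH x Px Hf; apply: IH.
  by apply: Hf => //; exact: mem_head.
by move=> y u' us; apply: Hf; rewrite in_cons us orbT.
Qed.

Lemma foldl_at (T : Type) (U : eqType) (f : T -> U -> T) (I P : T -> Prop) s x u0 :
  u0 \in s -> I x -> (forall y u, u \in s -> I y -> I (f y u)) ->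
  (forall y, I y -> P (f y u0)) ->
  (forall y u, u \in s -> I y -> P y -> P (f y u)) -> P (foldl f x s).
Proof.
elim: s x => //= u s IH x; rewrite in_cons => /orP[/eqP<-|us] Ix HI HP HQ.
  suff: I (foldl f (f x u0) s) /\ P (foldl f (f x u0) s) by case.
  apply: (foldl_ind (P := fun y => I y /\ P y)).
    by split; [apply: HI; [exact: mem_head|] | exact: HP].
  by move=> y u' us [Iy Py]; split; [apply: HI|apply: HQ] => //;
     rewrite in_cons us orbT.
apply: IH => //.
- by apply: HI => //; exact: mem_head.
- by move=> y u' us'; apply: HI; rewrite in_cons us' orbT.
- by move=> y u' us'; apply: HQ; rewrite in_cons us' orbT.
Qed.

Section Alg2.
Variables (R : realType) (n b L : nat) (sigma : 'I_n -> {ffun 'I_L -> 'I_b}).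
Hypothesis sigma_inj : injective sigma.
Variables (nest : 'I_n -> 'I_n) (bf : 'I_n -> {set 'I_n} -> R).
Local Notation C := (calS sigma).
Implicit Types (S : {set 'I_n}) (x y z k : 'I_n).

Definition full (x : 'I_n) (S : {set 'I_n}) := Nset nest x \subset S.
Definition single (x : 'I_n) := #|Nset nest x| == 1%N.
Definition compat (x y : 'I_n) := (nest x == nest y) || (single x && single y).

Hypothesis H1 : forall S x y, S \in C -> x \in S -> y \in S -> nest x = nest y ->
  bf x S = bf y S.
Hypothesis H2 : forall S x y, S \in C -> x \in S -> y \in S -> full x S -> full y S ->
  bf x S = bf y S.
Hypothesis H3 : forall S x y, S \in C -> x \in S -> y \in S -> full x S -> ~~ full y S ->
  bf x S < bf y S.
Hypothesis H4 : forall S x y, S \in C -> x \in S -> y \in S -> nest x != nest y ->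
  ~~ full x S -> ~~ full y S -> bf x S != bf y S.
Variables (s1 s2 : seq {set 'I_n}).
Hypothesis hs1 : forall S, (S \in s1) = (S \in C).
Hypothesis hs2 : forall S, (S \in s2) = (S \in C).

Lemma Nset_eq x y : nest x = nest y -> Nset nest x = Nset nest y.
Proof. by move=> e; apply/setP=> z; rewrite !inE e. Qed.

Lemma in_Nset x y : (y \in Nset nest x) = (nest y == nest x).
Proof. by rewrite inE. Qed.

Lemma full_eq S x y : nest x = nest y -> full x S = full y S.
Proof. by move=> e; rewrite /full (Nset_eq e). Qed.

Lemma single_eq x y : nest x = nest y -> single x = single y.
Proof. by move=> e; rewrite /single (Nset_eq e). Qed.

Lemma notfull S x z : nest z = nest x -> z \notin S -> ~~ full x S.
Proof.
move=> e zS; apply/negP => /subsetP h; move: zS; rewrite h //.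
by rewrite in_Nset e.
Qed.

Lemma full_in S x z : full x S -> nest z = nest x -> z \in S.
Proof. by move=> /subsetP h e; apply: h; rewrite in_Nset e. Qed.

Lemma D1 S x y : S \in C -> x \in S -> y \in S -> nest x != nest y ->
  bf x S = bf y S -> full x S /\ full y S.
Proof.
move=> SC xS yS nxy e.
case fx: (full x S); case fy: (full y S) => //.
- by move: (H3 SC xS yS fx (negbT fy)); rewrite e ltxx.
- by move: (H3 SC yS xS fy (negbT fx)); rewrite e ltxx.
- by move: (H4 SC xS yS nxy (negbT fx) (negbT fy)); rewrite e eqxx.
Qed.

Lemma D2 S x k : S \in C -> x \in S -> k \in S -> full x S -> bf x S <= bf k S.
Proof.
move=> SC xS kS fx; case fk: (full k S).
  by rewrite (H2 SC xS kS fx fk).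
by apply/ltW/H3 => //; rewrite fk.
Qed.

Lemma bf_neq S x y : S \in C -> x \in S -> y \in S -> nest x != nest y ->
  ~~ full x S -> bf x S != bf y S.
Proof.
move=> SC xS yS nxy nf; apply/eqP => e.
by have [fx _] := D1 SC xS yS nxy e; rewrite fx in nf.
Qed.

Lemma compat_sym x y : compat x y = compat y x.
Proof. by rewrite /compat eq_sym andbC. Qed.

Lemma compat_trans x k y : compat x k -> compat k y -> compat x y.
Proof.
rewrite /compat => /orP[/eqP e1|/andP[sx sk]] /orP[/eqP e2|/andP[sk' sy]].
- by rewrite e1 e2 eqxx.
- by rewrite (single_eq e1) sk' sy orbT.
- by rewrite sx -(single_eq e2) sk orbT.
- by rewrite sx sy orbT.
Qed.

Lemma nonsingle x : ~~ single x -> exists x', x' != x /\ nest x' = nest x.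
Proof.
move=> ns; case: (pickP [pred x' | (x' != x) && (nest x' == nest x)]) => [x' /andP[h /eqP e]|none].
  by exists x'.
exfalso; move/negP: ns; apply; apply/eqP.
suff -> : Nset nest x = [set x] by rewrite cards1.
apply/setP=> z; rewrite in_Nset inE; case: (eqVneq z x) => [->|zx]; first by rewrite eqxx.
by move: (none z) => /=; rewrite zx.
Qed.

Lemma coord x y : x != y -> exists l, sigma x l != sigma y l.
Proof.
move=> xy; case: (pickP (fun l => sigma x l != sigma y l)) => [l h|none]; first by exists l.
exfalso; move/negP: xy; apply; apply/eqP; apply: sigma_inj; apply/ffunP => l.
by apply/eqP; move: (none l) => /negbFE.
Qed.

Lemma Sld_C l d : Sld sigma l d \in C.
Proof.
rewrite /calS mem_undup; apply/allpairsP; exists (l, d); by rewrite !mem_enum.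
Qed.

Lemma in_Sld z l d : (z \in Sld sigma l d) = (sigma z l != d).
Proof. by rewrite inE. Qed.


Definition sound1 (E : Emat n) := forall a c, a != c ->
  (E a c = Some false -> nest a != nest c) /\ (E a c = Some true -> nest a = nest c).
Definition soundE (E : Emat n) := forall a c, a != c ->
  (E a c = Some false -> nest a != nest c) /\ (E a c = Some true -> compat a c).
Definition symE (E : Emat n) := forall a c, E a c = E c a.
Definition zeroF (E : Emat n) := forall x y, ~~ single x -> nest y != nest x ->
  exists2 a, nest a = nest x & E a y = Some false.

Lemma sound1E E : sound1 E -> soundE E.
Proof.
move=> sE a c ac; have [h1 h2] := sE a c ac; split => // /h2 e.
by rewrite /compat e eqxx.
Qed.

Lemma step1S_sound1 E S : S \in C -> sound1 E -> sound1 (step1S bf E S).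
Proof.
move=> SC sE a c ac; rewrite /step1S ac /=.
case: ifP => [/andP[aS cS]|_]; last exact: sE ac.
case: ifP => [d|/negbFE/eqP e].
  split=> // _; apply/eqP => nac; move/eqP: d; apply; exact: H1.
case: ifP => [/existsP[k /andP[kS lt]]|_]; last exact: sE ac.
split=> // _; apply/eqP; apply: contraT => nac.
have [fa _] := D1 SC aS cS nac e.
by move: (D2 SC aS kS fa); rewrite leNgt lt.
Qed.

Lemma step1S_sym E S : symE E -> symE (step1S bf E S).
Proof.
move=> sy a c; rewrite /step1S (sy a c) (eq_sym c a).
case: (boolP [&& a != c, a \in S & c \in S]) => [/and3P[ac aS cS]|h].
  rewrite ac aS cS /= eq_sym; case: ifP => // /negbFE/eqP ->; done.
move: h.
by case: (a \in S); case: (c \in S); rewrite /= ?andbF //= => /negbTE ->.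
Qed.

Lemma step1S_None E S a c : step1S bf E S a c = None -> E a c = None.
Proof. by rewrite /step1S; repeat case: ifP. Qed.

Lemma step1S_false E S a c : a != c -> a \in S -> c \in S -> bf a S != bf c S ->
  step1S bf E S a c = Some false.
Proof. by move=> ac aS cS d; rewrite /step1S ac aS cS d. Qed.

Lemma step1S_true E S a c : a != c -> a \in S -> c \in S -> bf a S = bf c S ->
  [exists k in S, bf k S < bf a S] -> step1S bf E S a c = Some true.
Proof. by move=> ac aS cS e h; rewrite /step1S ac aS cS e eqxx /= -e h. Qed.

Lemma step1S_keep E S a c : S \in C -> sound1 E -> a != c -> E a c != None ->
  sound1 (step1S bf E S) -> step1S bf E S a c = E a c.
Proof.
move=> SC sE ac En sE'.
case r: (step1S bf E S a c) => [[]|]; last by rewrite (step1S_None r) in En.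
- case r0: (E a c) En => [[]|] // _.
  by have [h _] := sE a c ac; have [_ h'] := sE' a c ac; move: (h r0); rewrite (h' r) eqxx.
- case r0: (E a c) En => [[]|] // _.
  by have [_ h] := sE a c ac; have [h' _] := sE' a c ac; move: (h' r); rewrite (h r0) eqxx.
Qed.

Definition E1 := foldl (step1S bf) (fun _ _ => None) s1.

Lemma E1_inv : sound1 E1 /\ symE E1.
Proof.
apply: (foldl_ind (P := fun E => sound1 E /\ symE E)) => //.
by move=> y u us [sy syy]; split; [apply: step1S_sound1 => //; rewrite -hs1 | exact: step1S_sym].
Qed.

Lemma E1_keep_pres (P : Emat n -> Prop) a c : a != c ->
  (forall E, E a c != None -> P E) -> (forall E E', E a c != None -> E' a c = E a c -> P E -> P E') ->
  forall S, S \in C -> forall E, sound1 E -> P E -> E a c != None -> P (step1S bf E S).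
Proof.
move=> ac _ HP S SC E sE PE En.
apply: (HP E) => //; apply: step1S_keep => //; exact: step1S_sound1.
Qed.

Lemma E1_set a c v0 S : S \in C -> a != c ->
  (forall E, sound1 E -> step1S bf E S a c = Some v0) -> E1 a c = Some v0.
Proof.
move=> SC ac hw.
apply: (foldl_at (I := fun E => sound1 E /\ symE E) (P := fun E => E a c = Some v0) (u0 := S)).
- by rewrite hs1.
- done.
- by move=> y u us [sy syy]; split; [apply: step1S_sound1 => //; rewrite -hs1 | exact: step1S_sym].
- by move=> y [sy _]; apply: hw.
- move=> y u us [sy _] Py; rewrite step1S_keep ?Py //; first by rewrite -hs1.
  by apply: step1S_sound1 => //; rewrite -hs1.
Qed.

Lemma E1_false a c S : S \in C -> a != c -> a \in S -> c \in S -> bf a S != bf c S ->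
  E1 a c = Some false.
Proof.
move=> SC ac aS cS d; apply: (E1_set SC ac) => E _; exact: step1S_false.
Qed.

Lemma E1_true a c S : S \in C -> a != c -> a \in S -> c \in S -> nest a = nest c ->
  [exists k in S, bf k S < bf a S] -> E1 a c = Some true.
Proof.
move=> SC ac aS cS e h; apply: (E1_set SC ac) => E _; apply: step1S_true => //.
exact: H1.
Qed.

Lemma E1_None a c : a != c -> E1 a c = None ->
  forall S, S \in C -> a \in S -> c \in S -> bf a S = bf c S.
Proof.
move=> ac En S SC aS cS; apply/eqP; apply: contraT => d.
by rewrite (E1_false SC ac aS cS d) in En.
Qed.

Lemma E1_zeroF : zeroF E1.
Proof.
move=> x y ns nyx.
have [x' [x'x ex']] := nonsingle ns.
have xx' : x != x' by rewrite eq_sym.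
have [l hl] := coord xx'.
case: (eqVneq (sigma y l) (sigma x' l)) => hy.
- exists x' => //.
  have yx' : nest y != nest x' by rewrite ex'.
  apply: (E1_false (S := Sld sigma l (sigma x l))).
  + exact: Sld_C.
  + by apply: contraNneq yx' => ->.
  + by rewrite in_Sld eq_sym.
  + by rewrite in_Sld hy eq_sym.
  + apply: bf_neq; first exact: Sld_C.
    * by rewrite in_Sld eq_sym.
    * by rewrite in_Sld hy eq_sym.
    * by rewrite eq_sym.
    * by apply: (notfull (z := x)) => //; rewrite in_Sld eqxx.
- exists x => //.
  apply: (E1_false (S := Sld sigma l (sigma x' l))).
  + exact: Sld_C.
  + by apply: contraNneq nyx => ->.
  + by rewrite in_Sld.
  + by rewrite in_Sld.
  + apply: bf_neq; first exact: Sld_C.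
    * by rewrite in_Sld.
    * by rewrite in_Sld.
    * by rewrite eq_sym.
    * by apply: (notfull (z := x')) => //; rewrite in_Sld eqxx.
Qed.


Lemma minBFP S m : m \in minBF bf S -> m \in S /\ forall k, k \in S -> bf m S <= bf k S.
Proof. by rewrite inE => /andP[mS /forall_inP h]. Qed.

Lemma minBF_in S m : m \in S -> (forall k, k \in S -> bf m S <= bf k S) -> m \in minBF bf S.
Proof. by move=> mS h; rewrite inE mS; apply/forall_inP. Qed.

Lemma minBF_eq S m m' : m \in minBF bf S -> m' \in minBF bf S -> bf m S = bf m' S.
Proof.
move=> /minBFP[mS hm] /minBFP[mS' hm']; apply/le_anti; rewrite hm // hm' //.
Qed.

Definition zcond E S := [exists i in minBF bf S, exists j in minBF bf S,
   (i != j) && (E i j == Some false)].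

Lemma step2S_sound E S : S \in C -> soundE E -> zeroF E -> soundE (step2S bf E S).
Proof.
move=> SC sE zE a c ac; rewrite /step2S -/(zcond E S).
case: ifP => [/existsP[i /andP[iM /existsP[j /andP[jM /andP[ij /eqP Eij]]]]] | nz].
  case: ifP => [h|_]; last exact: sE ac.
  split=> // _.
  have [nij _] := sE i j ij; have nij' := nij Eij.
  have [iS _] := minBFP iM; have [jS _] := minBFP jM.
  have [fi _] := D1 SC iS jS nij' (minBF_eq iM jM).
  have key : forall m, m \in minBF bf S -> full m S.
    move=> m mM; have [mS _] := minBFP mM.
    case: (eqVneq (nest m) (nest i)) => [e|nmi]; first by rewrite (full_eq _ e).
    by have [] := D1 SC mS iS nmi (minBF_eq mM iM).
  case/orP: h => /andP[M1 S1]; apply/eqP => e.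
  + by move: S1; rewrite (full_in (key _ M1)).
  + by move: S1; rewrite (full_in (key _ M1)).
case: ifP => [/and3P[_ aM cM]|_]; last exact: sE ac.
split=> // _; rewrite /compat; case: eqVneq => //= nac.
have [aS _] := minBFP aM; have [cS _] := minBFP cM.
have [fa fc] := D1 SC aS cS nac (minBF_eq aM cM).
apply/andP; split; apply: contraFT nz => ns.
- have nca : nest c != nest a by rewrite eq_sym.
  have [a' ea' Ea'] := zE a c ns nca.
  have a'S : a' \in S by apply: (full_in fa).
  have a'M : a' \in minBF bf S.
    apply: minBF_in => // k kS; rewrite (H1 SC a'S aS ea'); exact: (proj2 (minBFP aM)).
  apply/existsP; exists a'; rewrite a'M /=; apply/existsP; exists c; rewrite cM Ea' eqxx andbT /=.
  by apply/eqP => e'; move: nac; rewrite -e' ea' eqxx.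
- have [c' ec' Ec'] := zE c a ns nac.
  have c'S : c' \in S by apply: (full_in fc).
  have c'M : c' \in minBF bf S.
    apply: minBF_in => // k kS; rewrite (H1 SC c'S cS ec'); exact: (proj2 (minBFP cM)).
  apply/existsP; exists c'; rewrite c'M /=; apply/existsP; exists a; rewrite aM Ec' eqxx andbT /=.
  by apply/eqP => e'; move: nac; rewrite -e' ec' eqxx.
Qed.

Lemma step2S_false E S a c : E a c = Some false -> step2S bf E S a c = Some false.
Proof.
move=> Eac; rewrite /step2S -/(zcond E S); case: ifP => [_|nz]; first by case: ifP.
case: ifP => // /and3P[ac aM cM]; move/negbT: nz => /negP; case.
by apply/existsP; exists a; rewrite aM /=; apply/existsP; exists c; rewrite cM ac Eac.
Qed.

Lemma step2S_None E S a c : step2S bf E S a c = None -> E a c = None.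
Proof. by rewrite /step2S; case: ifP => _; case: ifP. Qed.

Lemma step2S_sym E S : symE E -> symE (step2S bf E S).
Proof.
move=> sy a c; rewrite /step2S /=; case: ifP => _; rewrite (sy a c).
  by rewrite orbC.
by rewrite (eq_sym c a); case: (a \in _); case: (c \in _); rewrite ?andbF.
Qed.

Lemma step2S_zeroF E S : zeroF E -> zeroF (step2S bf E S).
Proof.
move=> zE x y ns nyx; have [a ea Ea] := zE x y ns nyx.
by exists a => //; apply: step2S_false.
Qed.

Definition Inv2 E := [/\ soundE E, zeroF E & symE E].

Lemma Inv2_step E S : S \in C -> Inv2 E -> Inv2 (step2S bf E S).
Proof.
move=> SC [sE zE syE]; split.
- exact: step2S_sound.
- exact: step2S_zeroF.
- exact: step2S_sym.
Qed.

Lemma Inv2_E1 : Inv2 E1.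
Proof.
have [s1E sy] := E1_inv; split => //.
- exact: sound1E.
- exact: E1_zeroF.
Qed.

Definition E2 := foldl (step2S bf) E1 s2.

Lemma Inv2_E2 : Inv2 E2.
Proof.
apply: foldl_ind; first exact: Inv2_E1.
by move=> y u us; apply: Inv2_step; rewrite -hs2.
Qed.

Lemma step2S_keep_true E S a c : S \in C -> Inv2 E -> a != c -> nest a = nest c ->
  E a c = Some true -> step2S bf E S a c = Some true.
Proof.
move=> SC IE ac e Eac; have [sE' _ _] := Inv2_step SC IE.
case r: (step2S bf E S a c) => [[]|] //.
- by have [h _] := sE' a c ac; move: (h r); rewrite e eqxx.
- by rewrite (step2S_None r) in Eac.
Qed.

Lemma E2_pres (P : Emat n -> Prop) :
  (forall E S, S \in C -> Inv2 E -> P E -> P (step2S bf E S)) ->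
  P E1 -> P E2.
Proof.
move=> HP P1.
suff : Inv2 E2 /\ P E2 by case.
apply: (foldl_ind (P := fun E => Inv2 E /\ P E)) => //.
  by split => //; exact: Inv2_E1.
move=> y u us [Iy Py]; rewrite hs2 in us; split; [exact: Inv2_step | exact: HP].
Qed.

Lemma E2_at (P : Emat n -> Prop) S0 : S0 \in C ->
  (forall E S, S \in C -> Inv2 E -> P E -> P (step2S bf E S)) ->
  (forall E, Inv2 E -> P (step2S bf E S0)) -> P E2.
Proof.
move=> SC HP HS.
rewrite /E2; apply: (foldl_at (I := Inv2) (u0 := S0)).
- by rewrite hs2.
- exact: Inv2_E1.
- by move=> y u us; apply: Inv2_step; rewrite -hs2.
- exact: HS.
- by move=> y u us; apply: HP; rewrite -hs2.
Qed.

Lemma E2_true_pres a c : a != c -> nest a = nest c ->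
  forall E S, S \in C -> Inv2 E -> E a c = Some true -> step2S bf E S a c = Some true.
Proof. by move=> ac e E S SC IE; apply: step2S_keep_true. Qed.

Lemma lemG x k S0 : S0 \in C -> x != k -> nest x = nest k -> x \in S0 -> k \in S0 ->
  ~~ full x S0 -> E2 x k = Some true.
Proof.
move=> SC xk e xS kS nf.
case: (boolP [exists z in S0, bf z S0 < bf x S0]) => h.
  apply: (E2_pres (P := fun E => E x k = Some true)).
    by move=> E S SC' IE; apply: E2_true_pres.
  exact: (E1_true SC).
apply: (E2_at (P := fun E => E x k = Some true) SC).
  by move=> E S SC' IE; apply: E2_true_pres.
move=> E [sE zE syE].
have xM : x \in minBF bf S0.
  apply: minBF_in => // z zS; rewrite leNgt; apply/negP => lt.
  by move/negP: h; apply; apply/existsP; exists z; rewrite zS lt.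
have kM : k \in minBF bf S0.
  by apply: minBF_in => // z zS; rewrite -(H1 SC xS kS e); exact: (proj2 (minBFP xM)).
rewrite /step2S -/(zcond E S0).
case: ifP => [/existsP[i /andP[iM /existsP[j /andP[jM /andP[ij /eqP Eij]]]]] | _].
  exfalso.
  have [nij _] := sE i j ij; have nij' := nij Eij.
  have [iS _] := minBFP iM; have [jS _] := minBFP jM.
  have [fi _] := D1 SC iS jS nij' (minBF_eq iM jM).
  case: (eqVneq (nest x) (nest i)) => [e'|nxi].
    by rewrite (full_eq _ e') fi in nf.
  have [fx _] := D1 SC xS iS nxi (minBF_eq xM iM).
  by rewrite fx in nf.
by rewrite xk xM kM.
Qed.


Lemma lemK x y : ~~ single x -> nest y != nest x ->
  E2 x y = Some false \/ exists a, [/\ a != x, nest a = nest x & E2 x a = Some true].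
Proof.
move=> ns nyx.
have [x' [x'x ex']] := nonsingle ns.
have xy : x != y by apply: contraNneq nyx => <-.
have [s1E _] := E1_inv.
case E1xy: (E1 x y) => [[]|].
- by have [_ h] := s1E x y xy; move: nyx; rewrite (h E1xy) eqxx.
- left; apply: (E2_pres (P := fun E => E x y = Some false)) => //.
  by move=> E S _ _ h; apply: step2S_false.
- have hb := E1_None xy E1xy.
  have hf : forall S, S \in C -> x \in S -> y \in S -> full x S.
    move=> S SC xS yS; have nxy : nest x != nest y by rewrite eq_sym.
    by have [] := D1 SC xS yS nxy (hb S SC xS yS).
  have claim : forall l, sigma x l != sigma x' l -> sigma y l = sigma x' l.
    move=> l hl; apply/eqP; apply: contraT => hy.
    have SC := Sld_C l (sigma x' l).
    have := hf _ SC; rewrite !in_Sld hl hy => /(_ isT isT) fx.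
    by move: (full_in fx ex'); rewrite in_Sld eqxx.
  have yx' : y != x' by apply: contraNneq nyx => ->; rewrite ex'.
  have [l' hl'] := coord yx'.
  have ex : sigma x l' = sigma x' l'.
    by apply/eqP; apply: contraT => h; rewrite (claim _ h) eqxx in hl'.
  set S := Sld sigma l' (sigma y l').
  have SC : S \in C by exact: Sld_C.
  have xS : x \in S by rewrite in_Sld ex eq_sym.
  have x'S : x' \in S by rewrite in_Sld eq_sym.
  have yS : y \notin S by rewrite in_Sld eqxx.
  have xx' : x != x' by rewrite eq_sym.
  case: (boolP (full x S)) => fx; last first.
    by right; exists x'; split => //; exact: (lemG SC xx' (esym ex') xS x'S fx).
  have := E2_at (P := fun E => E x y = Some false \/ E x x' = Some true) SC.
  case.
  + move=> E S' SC' IE [h|h]; [left; exact: step2S_false | right].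
    by apply: E2_true_pres => //; rewrite ex'.
  + move=> E [sE zE syE].
    have xM : x \in minBF bf S by apply: minBF_in => // k kS; apply: D2.
    case: (boolP (zcond E S)) => z.
      by left; rewrite /step2S -/(zcond E S) z /= xM yS.
    right; have x'M : x' \in minBF bf S.
      apply: minBF_in => // k kS; rewrite -(H1 SC xS x'S (esym ex')).
      exact: (proj2 (minBFP xM)).
    by rewrite /step2S -/(zcond E S) (negbTE z) /= xx' xM x'M.
  + by left.
  + by move=> h; right; exists x'.
Qed.

Lemma main i j : i != j -> ~~ (single i && single j) ->
  algorithm2 bf s1 s2 i j = Some (nest i == nest j).
Proof.
move=> ij ns.
have [sE2 zE2 syE2] := Inv2_E2.
have E3keep : forall a c, E2 a c != None -> step3 E2 a c = E2 a c.
  by move=> a c; rewrite /step3; case: (E2 a c).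
have E3sound : forall a c, a != c -> step3 E2 a c = Some true -> compat a c.
  move=> a c ac; rewrite /step3.
  case: ifP => [/andP[_ /existsP[k /and4P[ka kc /eqP Eak /eqP Eck]]] _ | _ Eac].
    have ak : a != k by rewrite eq_sym.
    have ck : c != k by rewrite eq_sym.
    apply: (compat_trans (k := k)); first exact: (proj2 (sE2 a k ak) Eak).
    by rewrite compat_sym; exact: (proj2 (sE2 c k ck) Eck).
  exact: (proj2 (sE2 a c ac) Eac).
have E3None : forall a c, step3 E2 a c = None -> E2 a c = None.
  by move=> a c; rewrite /step3; case: ifP.
rewrite /algorithm2 -/E1 -/E2.
set E3 := step3 E2.
rewrite /step5.
case: (eqVneq (nest i) (nest j)) => [nij|nij].
- suff -> : step4 E3 i j = Some true by [].
  have nsi : ~~ single i by move: ns; rewrite -(single_eq nij) andbb.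
  have nsj : ~~ single j by rewrite -(single_eq nij).
  case E2ij: (E2 i j) => [[]|].
  + by rewrite /step4 /E3 E3keep ?E2ij.
  + by have [h _] := sE2 i j ij; move: (h E2ij); rewrite nij eqxx.
  + have hf : forall S, S \in C -> i \in S -> j \in S -> full i S.
      move=> S SC iS jS; apply: contraT => nf.
      by rewrite (lemG SC ij nij iS jS nf) in E2ij.
    have aux : forall x y k, nest x = nest y -> nest k = nest x -> k != y -> x != k ->
        (forall S, S \in C -> x \in S -> y \in S -> full x S) -> E2 x k = Some true.
      move=> x y k exy ekx ky xk hfx.
      have [l hl] := coord ky.
      have hxy : sigma x l != sigma y l.
        apply: contraT => /negbNE/eqP e.
        have SC := Sld_C l (sigma k l).
        have := hfx _ SC; rewrite !in_Sld e (eq_sym (sigma y l)) hl => /(_ isT isT) fx.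
        by move: (full_in fx ekx); rewrite in_Sld eqxx.
      have SC := Sld_C l (sigma y l).
      apply: (lemG SC xk) => //; try (by rewrite ?in_Sld ?ekx).
      by apply: (notfull (z := y)); [rewrite exy | rewrite in_Sld eqxx].
    case: (pickP (fun k => [&& k != i, k != j & nest k == nest i])) => [k /and3P[ki kj /eqP nk]|none].
    * have ik : i != k by rewrite eq_sym.
      have jk : j != k by rewrite eq_sym.
      have Eik := aux i j k nij nk kj ik hf.
      have hfj : forall S, S \in C -> j \in S -> i \in S -> full j S.
        by move=> S SC jS iS; rewrite -(full_eq _ nij); exact: hf.
      have nkj : nest k = nest j by rewrite nk nij.
      have Ejk := aux j i k (esym nij) nkj ki jk hfj.
      have E3ij : E3 i j = Some true.
        rewrite /E3 /step3 E2ij eqxx /=.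
        have -> : [exists k0, [&& k0 != i, k0 != j, E2 i k0 == Some true & E2 j k0 == Some true]].
          by apply/existsP; exists k; rewrite ki kj Eik Ejk !eqxx.
        done.
      by rewrite /step4 E3ij.
    * case E3ij: (E3 i j) => [[]|].
      - by rewrite /step4 E3ij.
      - by move: E3ij; rewrite /E3 /step3 E2ij; case: ifP.
      - rewrite /step4 E3ij eqxx /=.
        have -> : [forall k, ((k != i) && (k != j)) ==>
                  ((E3 i k != Some true) && (E3 j k != Some true))].
          apply/forallP => k; apply/implyP => /andP[ki kj]; apply/andP; split; apply/negP => /eqP h.
          + have ik : i != k by rewrite eq_sym.
            have := E3sound i k ik h; rewrite /compat (negbTE nsi) andFb orbF => /eqP e.
            by move: (none k); rewrite /= ki kj -e eqxx.
          + have jk : j != k by rewrite eq_sym.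
            have := E3sound j k jk h; rewrite /compat (negbTE nsj) andFb orbF => /eqP e.
            by move: (none k); rewrite /= ki kj -e -nij eqxx.
        done.
-
  suff : step4 E3 i j != Some true by case: (step4 E3 i j) => [[]|].
  rewrite /step4; case: ifP => [/andP[/eqP E3n /forallP hk]|_].
    exfalso; have E2n := E3None _ _ E3n.
    case/nandP: ns => nsx.
    + have nji : nest j != nest i by rewrite eq_sym.
      have [h|[a [ai ea Eia]]] := lemK nsx nji; first by rewrite h in E2n.
      have aj : a != j by apply/eqP => e; move: nij; rewrite -ea e eqxx.
      move: (hk a); rewrite ai aj /= /E3 (E3keep i a) ?Eia //.
    + have [h|[a [aj ea Eja]]] := lemK nsx nij; first by rewrite syE2 h in E2n.
      have ai : a != i by apply/eqP => e; move: nij; rewrite -ea e eqxx.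
      move: (hk a); rewrite ai aj /= /E3 (E3keep j a) ?Eja ?andbF //.
  apply/negP => /eqP h; have := E3sound i j ij h.
  by rewrite /compat (negbTE nij) /= (negbTE ns).
Qed.

End Alg2.

Section BFs.
Variables (R : realType) (n : nat) (nest : 'I_n -> 'I_n) (v lam vN : 'I_n -> R).
Hypothesis v_pos : forall i, 0 < v i.
Hypothesis lam_range : forall i, 0 <= lam (nest i) <= 1.
Hypothesis vN_pos : forall i, lam (nest i) = 0 -> 0 < vN (nest i).
Hypothesis assumption1 : forall i, lam (nest i) = 1 <-> #|Nset nest i| = 1%N.
Implicit Types (S A : {set 'I_n}) (i z : 'I_n).
Local Notation W := (wsum v).
Local Notation VN := (vNest nest v lam vN).

Definition Zs S := \sum_(c in labels nest) VN c S.
Definition base S := Zs setT / Zs S.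

Lemma wsum_gt0 A z : z \in A -> 0 < W A.
Proof.
move=> zA; rewrite /wsum (bigD1 z) //=.
have h : 0 <= \sum_(i in A | i != z) v i by apply: sumr_ge0 => j _; exact: ltW.
have := v_pos z; lra.
Qed.

Lemma VN_ge0 c S : c \in labels nest -> 0 <= VN c S.
Proof.
case/imsetP => i _ ->; rewrite /vNest; case: ifP => [/eqP l0|_]; last exact: powR_ge0.
by apply: mulr_ge0; [exact: ltW (vN_pos l0) | exact: ler0n].
Qed.

Lemma VN_gt0 i S : i \in S -> 0 < VN (nest i) S.
Proof.
move=> iS; rewrite /vNest; case: ifP => [/eqP l0|_].
  have -> : (NsetL nest (nest i) :&: S != set0).
    by apply/set0Pn; exists i; rewrite !inE eqxx.
  by rewrite mulr1; apply: vN_pos.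
by apply: powR_gt0; apply: (wsum_gt0 (z := i)); rewrite !inE eqxx.
Qed.

Lemma Zs_gt0 S i : i \in S -> 0 < Zs S.
Proof.
move=> iS; rewrite /Zs (bigD1 (nest i)) /=; last by apply/imsetP; exists i.
have h : 0 <= \sum_(c in labels nest | c != nest i) VN c S.
  by apply: sumr_ge0 => c /andP[cl _]; exact: VN_ge0.
have := VN_gt0 iS; lra.
Qed.

Lemma base_gt0 S i : i \in S -> 0 < base S.
Proof.
move=> iS; apply: divr_gt0; [apply: (Zs_gt0 (i := i)); exact: in_setT | exact: Zs_gt0 iS].
Qed.

Lemma BF_eq i S : i \in S -> BF nest v lam vN i S = base S * Mult nest v lam (nest i) S.
Proof.
move=> iS.
have t1 : (true%:R : R) = 1 by [].
have Wp : 0 < W (NsetL nest (nest i)) by apply: (wsum_gt0 (z := i)); rewrite inE.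
have WSp : 0 < W (NsetL nest (nest i) :&: S) by apply: (wsum_gt0 (z := i)); rewrite !inE eqxx iS.
have VS := VN_gt0 iS.
have VT := VN_gt0 (in_setT i).
have ZS := Zs_gt0 iS.
have ZT := Zs_gt0 (in_setT i).
have vi := v_pos i.
have hM : Mult nest v lam (nest i) S =
   VN (nest i) S / VN (nest i) setT * (W (NsetL nest (nest i)) / W (NsetL nest (nest i) :&: S)).
  move: VT; rewrite /Mult /vNest setIT; case: ifP => [/eqP l0|l0] VT'.
    rewrite l0 subr0 powRr1; last by apply: divr_ge0; apply: ltW.
    have -> : (NsetL nest (nest i) :&: S != set0).
      by apply/set0Pn; exists i; rewrite !inE eqxx.
    have -> : (NsetL nest (nest i) != set0).
      by apply/set0Pn; exists i; rewrite !inE eqxx.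
    rewrite /= ?mulr1n ?mulr1; field.
    by rewrite ?(lt0r_neq0 (vN_pos l0)) ?(lt0r_neq0 Wp) ?(lt0r_neq0 WSp).
  set w := W (NsetL nest (nest i)); set ws := W (NsetL nest (nest i) :&: S).
  have wq : 0 < w / ws by apply: divr_gt0.
  rewrite powRB; last by apply/implyP => _; rewrite lt0r_neq0.
  rewrite powRr1; last exact: ltW.
  have e : w `^ lam (nest i) = (w / ws) `^ lam (nest i) * ws `^ lam (nest i).
    have wsn : ws != 0 by rewrite lt0r_neq0.
    by rewrite -powRM ?divfK // ltW.
  rewrite e; have := powR_gt0 (lam (nest i)) WSp; have := powR_gt0 (lam (nest i)) wq => h1 h2.
  field.
  by rewrite !lt0r_neq0.
rewrite /BF /phi /base /Zs hM setIT.
change (Nset nest i) with (NsetL nest (nest i)).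
field.
repeat (apply/andP; split); apply: lt0r_neq0 => //.
Qed.


Lemma Mult_full i S : Nset nest i \subset S -> Mult nest v lam (nest i) S = 1.
Proof.
move=> h; rewrite /Mult.
change (Nset nest i) with (NsetL nest (nest i)) in h.
rewrite (setIidPl h) divff ?powR1 //.
by apply: lt0r_neq0; apply: (wsum_gt0 (z := i)); rewrite inE.
Qed.

Lemma Mult_gt1 i S : i \in S -> ~~ (Nset nest i \subset S) -> 1 < Mult nest v lam (nest i) S.
Proof.
move=> iS nsub.
have l1 : lam (nest i) != 1.
  apply/eqP => /assumption1 /eqP /cards1P [x hx].
  move: nsub; have : i \in Nset nest i by rewrite inE.
  rewrite hx inE => /eqP ix; rewrite -ix.
  by rewrite sub1set iS.
have lr := lam_range i.
have rpos : 0 < 1 - lam (nest i).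
  move: lr => /andP[_ h]; rewrite subr_gt0 lt_neqAle l1 h //.
change (Nset nest i) with (NsetL nest (nest i)) in nsub.
case/subsetPn: nsub => z zN zS.
have WSp : 0 < W (NsetL nest (nest i) :&: S) by apply: (wsum_gt0 (z := i)); rewrite !inE eqxx iS.
have Wd : 0 < W (NsetL nest (nest i) :\: S) by apply: (wsum_gt0 (z := z)); rewrite in_setD zS zN.
have sp : W (NsetL nest (nest i)) = W (NsetL nest (nest i) :&: S) + W (NsetL nest (nest i) :\: S).
  by rewrite /wsum (big_setID S).
have q : 1 < W (NsetL nest (nest i)) / W (NsetL nest (nest i) :&: S).
  rewrite ltr_pdivlMr // mul1r sp; lra.
rewrite /Mult.
have := @gt0_ltr_powR R (1 - lam (nest i)) rpos 1 (W (NsetL nest (nest i)) / W (NsetL nest (nest i) :&: S)).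
rewrite powR1; apply.
- by rewrite nnegrE.
- by rewrite nnegrE; apply: ltW; lra.
- exact: q.
Qed.

End BFs.

Unset Implicit Arguments.

Theorem theorem4p8 (R : realType) (n b : nat) (hn : (2 <= n)%N) (hb : (2 <= b)%N)
  (sigma : 'I_n -> {ffun 'I_(Lof n b) -> 'I_b}) (sigma_inj : injective sigma)
  (nest : 'I_n -> 'I_n) (v : 'I_n -> R) (lam : 'I_n -> R) (vN : 'I_n -> R)
  (v_pos : forall i, 0 < v i)
  (lam_range : forall i, 0 <= lam (nest i) <= 1)
  (vN_pos : forall i, lam (nest i) = 0 -> 0 < vN (nest i))
  (assumption1 : forall i, lam (nest i) = 1 <-> #|Nset nest i| = 1%N)
  (assumption2 : forall S, S \in calS sigma -> forall i j, nest i != nest j ->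
      partial_in nest (nest i) S -> partial_in nest (nest j) S ->
      Mult nest v lam (nest i) S != Mult nest v lam (nest j) S)
  (s1 s2 : seq {set 'I_n})
  (hs1 : perm_eq s1 (calS sigma)) (hs2 : perm_eq s2 (calS sigma)) :
  let E := algorithm2 (BF nest v lam vN) s1 s2 in
  forall i j : 'I_n, i != j ->
    ~~ ((#|Nset nest i| == 1%N) && (#|Nset nest j| == 1%N)) ->
    E i j = Some (nest i == nest j).
Proof.
move=> E i j ij ns.
have BFe := BF_eq v_pos vN_pos.
have Mf := Mult_full lam v_pos.
have Mg := Mult_gt1 v_pos lam_range assumption1.
have bp := base_gt0 v_pos vN_pos.
apply: (@main R n b (Lof n b) sigma sigma_inj nest (BF nest v lam vN)) => //.
- move=> S x y SC xS yS e; by rewrite !BFe // e.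
- move=> S x y SC xS yS fx fy; by rewrite !BFe // !Mf.
- move=> S x y SC xS yS fx fy; rewrite !BFe // Mf // mulr1.
  rewrite -[X in X < _]mulr1 ltr_pM2l; [exact: Mg | exact: bp _ _ xS].
- move=> S x y SC xS yS nxy fx fy; rewrite !BFe //.
  have px : partial_in nest (nest x) S.
    by apply/andP; split => //; apply/set0Pn; exists x; rewrite !inE eqxx xS.
  have py : partial_in nest (nest y) S.
    by apply/andP; split => //; apply/set0Pn; exists y; rewrite !inE eqxx yS.
  apply: contra (assumption2 S SC x y nxy px py) => /eqP e.
  apply/eqP; apply: (mulfI (lt0r_neq0 (bp _ _ xS))); exact: e.
- exact: perm_mem hs1.
- exact: perm_mem hs2.
Qed.
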